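(* Let $(p_k)_{k\in\mathbb N}$ be a probability distribution on $\mathbb N$ with $p_k>0$ for infinitely many $k$, let $\rho(t):=\#\{k\in\mathbb N:p_k\ge t^{-1}\}$ for $t>0$, and let $g$ be a function slowly varying at $\infty$. The following are equivalent: (a) $\sum_{k\ge1}p_k\mathbf 1_{\{p_k\le t\}}\sim t\,g(1/t)$ as $t\to0+$; (b) for all $\lambda>0$, $\lim_{t\to\infty}\frac{\rho(\lambda t)-\rho(t)}{g(t)}=\log\lambda$. *)

(* Defs.v *)
From HB Require Import structures.
From mathcomp Require Import all_boot all_order all_algebra.
From mathcomp Require Import all_classical all_reals all_analysis.
Set Implicit Arguments. Unset Strict Implicit. Unset Printing Implicit Defensive.
Import Order.TTheory GRing.Theory Num.Theory.
Import numFieldNormedType.Exports.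
Local Open Scope classical_set_scope.
Local Open Scope ring_scope.

Definition rsum1 {R : realType} (F : nat -> R) : R :=
  limn (fun n => \sum_(1 <= k < n) F k).

Definition prob_distr {R : realType} (p : nat -> R) : Prop :=
  (forall k, (1 <= k)%N -> 0 <= p k) /\
  ((fun n => \sum_(1 <= k < n) p k) @ \oo --> (1 : R)).

Definition inf_many_pos {R : realType} (p : nat -> R) : Prop :=
  forall N : nat, exists k : nat, (N < k)%N /\ 0 < p k.

(* rho(t) = #{k >= 1 : p_k >= t^{-1}}, as a real number (the count of a
   finite set, written as a series of indicators). *)
Definition rho {R : realType} (p : nat -> R) (t : R) : R :=
  rsum1 (fun k => (if t^-1 <= p k then 1 else 0)).

Definition trunc_mass {R : realType} (p : nat -> R) (t : R) : R :=
  rsum1 (fun k => (if p k <= t then p k else 0)).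

Definition slowly_varying {R : realType} (g : R -> R) : Prop :=
  (forall x : R, 0 < x -> 0 < g x) /\
  measurable_fun (`]0, +oo[ : set R) g /\
  (forall lam : R, 0 < lam ->
     (fun t => g (lam * t) / g t) @ +oo --> (1 : R)).

(* Main.v *)
Require Import Defs.
From HB Require Import structures.
From mathcomp Require Import all_boot all_order all_algebra.
From mathcomp Require Import all_classical all_reals all_analysis.
From mathcomp Require Import ring lra.
Set Implicit Arguments. Unset Strict Implicit. Unset Printing Implicit Defensive.
Import Order.TTheory GRing.Theory Num.Theory.
Import numFieldNormedType.Exports.
Local Open Scope classical_set_scope.
Local Open Scope ring_scope.
Section Ev.
Variable R : realType.

Definition ev (P : R -> Prop) := exists M : R, forall x, M < x -> P x.

Lemma ev_and P Q : ev P -> ev Q -> ev (fun x => P x /\ Q x).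
Proof.
case=> M1 H1 [M2 H2]; exists (Num.max M1 M2) => x; rewrite gt_max => /andP[a b].
by split; [apply: H1|apply: H2].
Qed.

Lemma ev_imp (P Q : R -> Prop) : (forall x, P x -> Q x) -> ev P -> ev Q.
Proof. by move=> PQ [M H]; exists M => x /H /PQ. Qed.

Lemma ev_gt a : ev (fun x => a < x).
Proof. by exists a. Qed.

Lemma pinftyP (P : R -> Prop) :
  (\forall x \near +oo, P x) <-> ev P.
Proof.
split.
- by case=> M [_ HM]; exists M.
- by case=> M HM; exists M; split => //; exact: num_real.
Qed.

Lemma LimP (f : R -> R) (l : R) :
  f x @[x --> +oo] --> l <-> forall e, 0 < e -> ev (fun x => `|f x - l| <= e).
Proof.
rewrite cvgrPdist_le; split => H e e0.
  by apply/pinftyP; move: (H e e0); apply: filterS => x; rewrite distrC.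
by move/pinftyP: (H e e0); apply: filterS => x; rewrite distrC.
Qed.

Lemma Lim_ev (f : R -> R) (l : R) e : f x @[x --> +oo] --> l -> 0 < e ->
  ev (fun x => l - e <= f x <= l + e).
Proof.
move=> /LimP H e0; apply: ev_imp (H e e0) => x.
rewrite ler_norml => /andP[a b]; apply/andP; split; lra.
Qed.

Lemma Lim_sandwich (f : R -> R) (l : R) :
  (forall e, 0 < e -> exists lo hi : R -> R, exists l1 l2 : R,
     [/\ lo x @[x --> +oo] --> l1, hi x @[x --> +oo] --> l2, l - e <= l1, l2 <= l + e &
      ev (fun x => lo x <= f x <= hi x)]) ->
  f x @[x --> +oo] --> l.
Proof.
move=> H; apply/LimP => e e0.
have e20 : 0 < e / 2 by rewrite divr_gt0.
case: (H _ e20) => lo [hi [l1 [l2 [Hlo Hhi le1 le2 Hev]]]].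
have := ev_and (Lim_ev Hlo e20) (ev_and (Lim_ev Hhi e20) Hev).
apply: ev_imp => x [/andP[a b] [/andP[c d] /andP[u v]]].
rewrite ler_norml; apply/andP; split; lra.
Qed.

Lemma Lim_comp (f : R -> R) (l : R) c : 0 < c -> f x @[x --> +oo] --> l ->
  f (c * x) @[x --> +oo] --> l.
Proof.
move=> c0 /LimP H; apply/LimP => e e0; case: (H e e0) => M HM.
exists (M / c) => x Hx; apply: HM.
by rewrite mulrC -ltr_pdivrMr.
Qed.

End Ev.
Lemma inftyP (P : nat -> Prop) :
  (\forall n \near \oo, P n) <-> exists N, forall n, (N <= n)%N -> P n.
Proof.
split.
- by case=> N _ HN; exists N.
- by case=> N HN; exists N.
Qed.

Section Basic.
Variable R : realType.
Variable p : nat -> R.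
Hypothesis Hp : prob_distr p.

Let Hp0 : forall k, (1 <= k)%N -> 0 <= p k. Proof. by case: Hp. Qed.
Let Hp1 : (fun n => \sum_(1 <= k < n) p k) @ \oo --> (1 : R). Proof. by case: Hp. Qed.

Lemma sum1S (G : nat -> R) n : (1 <= n)%N ->
  \sum_(1 <= k < n.+1) G k = \sum_(1 <= k < n) G k + G n.
Proof. by move=> h; rewrite big_nat_recr. Qed.

Lemma sum_stab (G : nat -> R) N n : (forall k, (N <= k)%N -> G k = 0) ->
  (N <= n)%N -> \sum_(1 <= k < n) G k = \sum_(1 <= k < N) G k.
Proof.
move=> HG; elim: n => [|n IH].
  by rewrite leqn0 => /eqP ->.
rewrite leq_eqVlt => /orP[/eqP <- //|].
rewrite ltnS => Hn; case: n IH Hn => [|n] IH Hn.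
  by move: Hn; rewrite leqn0 => /eqP ->; rewrite !big_geq.
by rewrite sum1S // IH // HG // addr0.
Qed.

Lemma rsum1_fin (F : nat -> R) N : (forall k, (N <= k)%N -> F k = 0) ->
  rsum1 F = \sum_(1 <= k < N) F k.
Proof.
move=> HF; rewrite /rsum1; apply: lim_near_cst; first exact: norm_hausdorff.
by exists N => // n /= Hn; rewrite (sum_stab HF Hn).
Qed.

Lemma p_small a : 0 < a -> exists N, forall k, (N <= k)%N -> p k < a.
Proof.
move=> a0.
have H2 : (fun n => \sum_(1 <= k < n.+1) p k - \sum_(1 <= k < n) p k) @ \oo --> (1 - 1 : R).
  apply: cvgB => //; by rewrite (cvg_shiftS (fun n => \sum_(1 <= k < n) p k)).
rewrite subrr in H2.
move/cvgrPdist_lt: H2 => /(_ a a0) /inftyP [N HN].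
exists (N.+1) => k Hk.
have := HN k (ltnW Hk); rewrite sum1S; last by apply: leq_trans Hk.
rewrite [_ + p k]addrC addrK sub0r normrN => H; exact: le_lt_trans (ler_norm _) H.
Qed.

Lemma psum_le1 n : \sum_(1 <= k < n) p k <= 1.
Proof.
have nd : nondecreasing_seq (fun n => \sum_(1 <= k < n) p k).
  apply/nondecreasing_seqP => m; case: m => [|m].
    by rewrite !big_geq.
  rewrite (@sum1S p m.+1) //.
  have h : \sum_(1 <= k < m.+1) p k <= \sum_(1 <= k < m.+1) p k + p m.+1 by rewrite lerDl Hp0.
  exact: h.
have := nondecreasing_cvgn_le nd (cvgP _ Hp1) n.
by rewrite (cvg_lim (@norm_hausdorff _ R^o) Hp1).
Qed.

Definition up (t : R) := rsum1 (fun k => if t <= p k then p k else 0).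
Definition Q (y : R) := y * (1 - up y^-1).
Definition V (y : R) := y * trunc_mass p y^-1.

Lemma up_fin t N : (forall k, (N <= k)%N -> p k < t) ->
  up t = \sum_(1 <= k < N) (if t <= p k then p k else 0).
Proof.
move=> H; apply: rsum1_fin => k /H pk.
by rewrite leNgt pk.
Qed.

Lemma rho_fin y N : (forall k, (N <= k)%N -> p k < y^-1) ->
  rho p y = \sum_(1 <= k < N) (if y^-1 <= p k then 1 else 0).
Proof.
move=> H; apply: rsum1_fin => k /H pk.
by rewrite leNgt pk.
Qed.

Lemma trunc_fin t N : (forall k, (N <= k)%N -> p k < t) ->
  trunc_mass p t = 1 - \sum_(1 <= k < N) (if t < p k then p k else 0).
Proof.
move=> H; rewrite /trunc_mass /rsum1; apply: cvg_lim; first exact: norm_hausdorff.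
set c := \sum_(1 <= k < N) _.
have HG : forall k, (N <= k)%N -> (if t < p k then p k else 0) = 0.
  by move=> k /H pk; rewrite ltNge (ltW pk).
apply: (cvg_trans _ (cvgB Hp1 (cvg_cst c))).
apply: near_eq_cvg; exists N => // n /= Hn.
change (\sum_(1 <= k < n) p k - c = \sum_(1 <= k < n) (if p k <= t then p k else 0)).
rewrite /c -(sum_stab HG Hn) -sumrB; apply: eq_bigr => k _.
case: (leP (p k) t) => h1; case: (ltP t (p k)) => h2; rewrite ?subrr ?subr0 //;
  exfalso; move: h1 h2; lra.
Qed.


Lemma sum_le_nat (F G : nat -> R) N : (forall k, (1 <= k)%N -> F k <= G k) ->
  \sum_(1 <= k < N) F k <= \sum_(1 <= k < N) G k.
Proof.
move=> H; rewrite big_nat_cond [X in _ <= X]big_nat_cond.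
by apply: ler_sum => k /andP[/andP[k1 _] _]; apply: H.
Qed.

Lemma up_le1 (t : R) : 0 < t -> up t <= 1.
Proof.
move=> t0; case: (p_small t0) => N HN; rewrite (up_fin HN).
apply: le_trans (psum_le1 N); apply: sum_le_nat => k k1.
by case: ifP => // _; apply: Hp0.
Qed.

Lemma Q_ge0 (y : R) : 0 < y -> 0 <= Q y.
Proof.
move=> y0; rewrite /Q mulr_ge0 ?(ltW y0) // subr_ge0 up_le1 //.
by rewrite invr_gt0.
Qed.

Lemma keyfacts (y lam : R) : 0 < y -> 1 <= lam ->
  [/\ 0 < (lam * y)^-1, (lam * y)^-1 <= y^-1,
      (forall x : R, (lam * y)^-1 <= x -> 1 <= lam * y * x) &
      (forall x : R, x < y^-1 -> y * x <= 1)].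
Proof.
move=> y0 l1; have ly0 : 0 < lam * y by rewrite mulr_gt0 // (lt_le_trans ltr01 l1).
split.
- by rewrite invr_gt0.
- by rewrite lef_pV2 ?posrE // ler_peMl // ltW.
- by move=> x hx; rewrite -(mulfV (lt0r_neq0 ly0)) ler_pM2l.
- by move=> x hx; rewrite -(mulfV (lt0r_neq0 y0)) ler_pM2l // ltW.
Qed.

Lemma K1 (y lam : R) : 0 < y -> 1 <= lam ->
  rho p (lam * y) - rho p y <= lam * Q y - Q (lam * y).
Proof.
move=> y0 l1; have [a0 ab ka kb] := keyfacts y0 l1.
case: (p_small a0) => N HN.
have HNb : forall k, (N <= k)%N -> p k < y^-1 by move=> k /HN h; exact: lt_le_trans h ab.
rewrite (rho_fin HN) (rho_fin HNb) /Q (up_fin HN) (up_fin HNb).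
set C := fun k => if (lam * y)^-1 <= p k then p k else 0.
set D := fun k => if y^-1 <= p k then p k else 0.
have E : \sum_(1 <= k < N) (lam * y) * (C k - D k) =
   lam * (y * (1 - \sum_(1 <= k < N) D k)) - lam * y * (1 - \sum_(1 <= k < N) C k).
  by rewrite -big_distrr sumrB /=; ring.
rewrite -E -sumrB; apply: sum_le_nat => k _; rewrite /C /D.
case: (leP (lam * y)^-1 (p k)) => h1; case: (leP y^-1 (p k)) => h2;
  rewrite ?subrr ?mulr0 ?subr0 //.
- by rewrite ka.
- exfalso; move: h1 h2 ab; lra.
Qed.

Lemma K2 (y lam : R) : 0 < y -> 1 <= lam ->
  Q y - Q (lam * y) / lam <= rho p (lam * y) - rho p y.
Proof.
move=> y0 l1; have [a0 ab ka kb] := keyfacts y0 l1.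
have lam0 : lam != 0 by rewrite gt_eqF // (lt_le_trans ltr01 l1).
case: (p_small a0) => N HN.
have HNb : forall k, (N <= k)%N -> p k < y^-1 by move=> k /HN h; exact: lt_le_trans h ab.
rewrite (rho_fin HN) (rho_fin HNb) /Q (up_fin HN) (up_fin HNb).
set C := fun k => if (lam * y)^-1 <= p k then p k else 0.
set D := fun k => if y^-1 <= p k then p k else 0.
have E : \sum_(1 <= k < N) y * (C k - D k) =
   y * (1 - \sum_(1 <= k < N) D k) - lam * y * (1 - \sum_(1 <= k < N) C k) / lam.
  by rewrite -big_distrr sumrB /=; field.
rewrite -E -sumrB; apply: sum_le_nat => k _; rewrite /C /D.
case: (leP (lam * y)^-1 (p k)) => h1; case: (leP y^-1 (p k)) => h2;
  rewrite ?subrr ?mulr0 ?subr0 //.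
- by rewrite kb.
- exfalso; move: h1 h2 ab; lra.
Qed.

Lemma rho_mono (y lam : R) : 0 < y -> 1 <= lam -> 0 <= rho p (lam * y) - rho p y.
Proof.
move=> y0 l1; have [a0 ab ka kb] := keyfacts y0 l1.
case: (p_small a0) => N HN.
have HNb : forall k, (N <= k)%N -> p k < y^-1 by move=> k /HN h; exact: lt_le_trans h ab.
rewrite (rho_fin HN) (rho_fin HNb) -sumrB sumr_ge0 // => k _.
case: (leP (lam * y)^-1 (p k)) => h1; case: (leP y^-1 (p k)) => h2;
  rewrite ?subrr ?subr0 //.
exfalso; move: h1 h2 ab; lra.
Qed.

Lemma trunc_lo (t : R) : 0 < t -> 1 - up t <= trunc_mass p t.
Proof.
move=> t0; case: (p_small t0) => N HN.
rewrite (trunc_fin HN) (up_fin HN) lerD2l lerN2.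
apply: sum_le_nat => k _; case: (leP t (p k)) => h1; case: (ltP t (p k)) => h2 //;
move: h1 h2 t0; lra.
Qed.

Lemma trunc_hi (t t' : R) : 0 < t -> t < t' -> trunc_mass p t <= 1 - up t'.
Proof.
move=> t0 tt; case: (p_small t0) => N HN.
have HN' : forall k, (N <= k)%N -> p k < t' by move=> k /HN h; exact: lt_trans h tt.
rewrite (trunc_fin HN) (up_fin HN') lerD2l lerN2.
apply: sum_le_nat => k k1; case: (leP t' (p k)) => h1; case: (ltP t (p k)) => h2 //.
- exfalso; move: h1 h2 tt; lra.
- exact: Hp0.
Qed.


Lemma sum_le_nat2 (F G : nat -> R) N : (forall k, (1 <= k)%N -> (k < N)%N -> F k <= G k) ->
  \sum_(1 <= k < N) F k <= \sum_(1 <= k < N) G k.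
Proof.
move=> H; rewrite big_nat_cond [X in _ <= X]big_nat_cond.
by apply: ler_sum => k /andP[/andP[k1 k2] _]; apply: H.
Qed.

Lemma sum_mono_n (G : nat -> R) m n : (forall k, (1 <= k)%N -> 0 <= G k) ->
  (m <= n)%N -> \sum_(1 <= k < m) G k <= \sum_(1 <= k < n) G k.
Proof.
move=> HG; elim: n => [|n IH].
  by rewrite leqn0 => /eqP ->.
rewrite leq_eqVlt => /orP[/eqP <- //|].
rewrite ltnS => Hn; apply: le_trans (IH Hn) _.
case: n {IH} Hn => [|n] Hn; first by rewrite !big_geq.
by rewrite (@sum1S G n.+1) // lerDl HG.
Qed.

Lemma minpos n : exists2 t0 : R, 0 < t0 &
  forall k, (k < n)%N -> 0 < p k -> t0 <= p k.
Proof.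
elim: n => [|n [t0 t00 Ht0]]; first by exists 1.
case: (ltP 0 (p n)) => hn.
- exists (Num.min t0 (p n)); first by rewrite lt_min t00 hn.
  move=> k; rewrite ltnS leq_eqVlt => /orP[/eqP -> _|kn pk].
    by rewrite ge_min lexx orbT.
  by rewrite ge_min Ht0.
- exists t0 => // k; rewrite ltnS leq_eqVlt => /orP[/eqP -> pk|kn pk].
    by exfalso; move: hn pk; lra.
  exact: Ht0.
Qed.

Lemma up_near1 (eta : R) : 0 < eta -> exists2 t0 : R, 0 < t0 &
  forall t, 0 < t -> t <= t0 -> 1 - up t <= eta.
Proof.
move=> e0.
move/cvgrPdist_le: Hp1 => /(_ eta e0) /inftyP [N1 HN1].
have HS : 1 - eta <= \sum_(1 <= k < N1) p k.
  by have := HN1 N1 (leqnn _); rewrite ler_norml => /andP[a b]; lra.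
case: (minpos N1) => t0 t00 Ht0; exists t0 => // t t0' tt0.
case: (p_small t0') => N HN.
have HM : forall k, (maxn N N1 <= k)%N -> p k < t.
  by move=> k; rewrite geq_max => /andP[/HN h _].
rewrite (up_fin HM).
suff : \sum_(1 <= k < N1) p k <= \sum_(1 <= k < maxn N N1) (if t <= p k then p k else 0).
  by move: HS; lra.
apply: le_trans (sum_mono_n _ (leq_maxr N N1)); last first.
  by move=> k k1; case: ifP => // _; apply: Hp0.
apply: sum_le_nat2 => k k1 kN; case: ifP => // /negbT; rewrite -ltNge => ht.
have := Hp0 k1; rewrite le_eqVlt => /orP[/eqP <- //| pk].
by have := Ht0 k kN pk; move: ht tt0; lra.
Qed.

End Basic.

Section LimH.
Variable R : realType.
Local Notation Lim f l := (f x @[x --> (+oo : set_system R)] --> (l : R)).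

Lemma Lim_cst (c : R) : Lim (fun _ => c) c.
Proof. exact: cvg_cst. Qed.

Lemma Lim_add (f h : R -> R) a b : Lim f a -> Lim h b -> Lim (fun x => f x + h x) (a + b).
Proof. by move=> Hf Hh; exact: cvgD Hf Hh. Qed.

Lemma Lim_opp (f : R -> R) a : Lim f a -> Lim (fun x => - f x) (- a).
Proof. by move=> Hf; exact: cvgN Hf. Qed.

Lemma Lim_mul (f h : R -> R) a b : Lim f a -> Lim h b -> Lim (fun x => f x * h x) (a * b).
Proof. by move=> Hf Hh; exact: cvgM Hf Hh. Qed.

Lemma Lim_ev_eq (f h : R -> R) l : ev (fun x => f x = h x) -> Lim h l -> Lim f l.
Proof.
move=> He /LimP Hh; apply/LimP => e e0.
by apply: ev_imp (ev_and He (Hh e e0)) => x [-> ].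
Qed.

Lemma Lim_sum n (F : nat -> R -> R) (l : nat -> R) :
  (forall j, Lim (F j) (l j)) ->
  Lim (fun y => \sum_(j < n) F j y) (\sum_(j < n) l j).
Proof.
move=> H; elim: n => [|n IH].
  have E : ev (fun y => \sum_(j < 0) F j y = (fun _ => 0) y).
    by exists 0 => x _; rewrite big_ord0.
  rewrite big_ord0; exact: (Lim_ev_eq E (@Lim_cst 0)).
have E : ev (fun y => \sum_(j < n.+1) F j y = (fun y => \sum_(j < n) F j y + F n y) y).
  by exists 0 => x _; rewrite big_ord_recr.
rewrite (big_ord_recr n l) /=; exact: (Lim_ev_eq E (Lim_add IH (H n))).
Qed.

Lemma ratio_ev (A B : R -> R) (x th : R) : Lim A x -> Lim B x -> 0 < x -> 1 < th ->
  ev (fun z => A z <= th * B z).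
Proof.
move=> HA HB x0 th1.
have d0 : 0 < x * (th - 1) / (th + 1) by rewrite divr_gt0 ?mulr_gt0 //; lra.
apply: ev_imp (ev_and (Lim_ev HA d0) (Lim_ev HB d0)) => z [/andP[_ a] /andP[b _]].
set d := x * (th - 1) / (th + 1) in a b d0.
have hd : d * (th + 1) = x * (th - 1) by rewrite /d divfK //; lra.
have : th * (x - d) <= th * B z by rewrite ler_pM2l //; lra.
nra.
Qed.

Lemma right_inv (h : R -> R) (l : R) :
  h x @[x --> 0^'+] --> l <-> Lim (fun y => h y^-1) l.
Proof.
rewrite cvgrPdist_le LimP; split => H e e0.
- move: (H e e0) => /nbhs_ballP [d /= d0 Hd]; exists d^-1 => y yd.
  have y0 : 0 < y by apply: lt_trans yd; rewrite invr_gt0.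
  rewrite distrC; apply: Hd; last by rewrite invr_gt0.
  rewrite /ball /= sub0r normrN gtr0_norm ?invr_gt0 //.
  by rewrite -(invrK d) ltf_pV2 ?posrE ?invr_gt0.
- case: (H e e0) => M HM; apply/nbhs_ballP; exists (Num.max M 1)^-1 => /=.
    by rewrite invr_gt0 lt_max ltr01 orbT.
  move=> t; rewrite /ball /= sub0r normrN => td t0.
  rewrite gtr0_norm // in td.
  have m0 : 0 < Num.max M 1 by rewrite lt_max ltr01 orbT.
  have := HM t^-1; rewrite invrK distrC; apply.
  have : Num.max M 1 < t^-1 by rewrite -(invrK (Num.max M 1)) ltf_pV2 ?posrE ?invr_gt0.
  by rewrite gt_max => /andP[].
Qed.

End LimH.

Section Main.
Variable R : realType.
Variable p : nat -> R.
Hypothesis Hp : prob_distr p.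
Variable g : R -> R.
Hypothesis Hg0 : forall x, 0 < x -> 0 < g x.
Hypothesis Hg1 : forall lam, 0 < lam -> (fun t => g (lam * t) / g t) x @[x --> (+oo : set_system R)] --> (1 : R).
Local Notation Lim f l := (f x @[x --> (+oo : set_system R)] --> (l : R)).
Local Notation Q := (Q p).
Local Notation V := (V p).

Lemma ler_divg (a b y : R) : 0 < y -> a <= b -> a / g y <= b / g y.
Proof. by move=> y0 ab; rewrite ler_pM2r // invr_gt0 Hg0. Qed.

Lemma Lim_scaled (F : R -> R) (l c : R) : 0 < c -> Lim (fun y => F y / g y) l ->
  Lim (fun y => F (c * y) / g y) l.
Proof.
move=> c0 HF.
have H := Lim_mul (Lim_comp c0 HF) (Hg1 c0); rewrite mulr1 in H.
have E : ev (fun y => F (c * y) / g y = F (c * y) / g (c * y) * (g (c * y) / g y)).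
  exists 0 => y y0; have : 0 < g (c * y) by apply: Hg0; rewrite mulr_gt0.
  by move=> h; field; rewrite !gt_eqF // Hg0.
exact: (Lim_ev_eq E H).
Qed.

Lemma a_to_a' : Lim (fun y => V y / g y) 1 -> Lim (fun y => Q y / g y) 1.
Proof.
move=> HV; apply: Lim_sandwich => e e0.
have nu0 : 0 < 1 + e by lra.
have Hlo := Lim_mul (Lim_scaled nu0 HV) (@Lim_cst _ (1 + e)^-1).
exists (fun y => V ((1 + e) * y) / g y * (1 + e)^-1), (fun y => V y / g y).
exists (1 * (1 + e)^-1), 1; split => //.
- rewrite mul1r -div1r ler_pdivlMr //; nra.
- lra.
- exists 0 => y y0; apply/andP; split; last first.
    apply: ler_divg => //; rewrite /V /Q ler_pM2l //.
    by apply: trunc_lo => //; rewrite invr_gt0.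
  rewrite mulrAC; apply: ler_divg => //; rewrite ler_pdivrMr //.
  have h : trunc_mass p ((1 + e) * y)^-1 <= 1 - up p y^-1.
    apply: trunc_hi => //; first by rewrite invr_gt0 mulr_gt0.
    by rewrite ltf_pV2 ?posrE ?mulr_gt0 // ltr_pMl //; lra.
  have h2 : 0 < (1 + e) * y by rewrite mulr_gt0.
  rewrite /V /Q; nra.
Qed.

Lemma a'_to_a : Lim (fun y => Q y / g y) 1 -> Lim (fun y => V y / g y) 1.
Proof.
move=> HQ; apply: Lim_sandwich => e e0.
have nu0 : 0 < (1 + e)^-1 by rewrite invr_gt0; lra.
have Hhi := Lim_mul (Lim_scaled nu0 HQ) (@Lim_cst _ (1 + e)).
exists (fun y => Q y / g y), (fun y => Q ((1 + e)^-1 * y) / g y * (1 + e)).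
exists 1, (1 * (1 + e)); split => //.
- lra.
- lra.
- exists 0 => y y0; apply/andP; split.
    apply: ler_divg => //; rewrite /V /Q ler_pM2l //.
    by apply: trunc_lo => //; rewrite invr_gt0.
  have -> : V y / g y = y * trunc_mass p y^-1 / g y by [].
  rewrite [X in _ <= X]mulrAC; apply: ler_divg => //.
  have h : trunc_mass p y^-1 <= 1 - up p ((1 + e)^-1 * y)^-1.
    apply: trunc_hi => //; first by rewrite invr_gt0.
    rewrite invrM ?unitfE ?gt_eqF // invrK.
    by rewrite ltr_pMr ?invr_gt0 //; lra.
  have -> : Q ((1 + e)^-1 * y) * (1 + e) = y * (1 - up p ((1 + e)^-1 * y)^-1).
    by rewrite /Q; field; lra.
  rewrite /V ler_pM2l //.
Qed.


Lemma tele_hi (y mu : R) n : 0 < y -> 1 <= mu ->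
  rho p (mu ^+ n * y) - rho p y <= \sum_(j < n) (mu * Q (mu ^+ j * y) - Q (mu ^+ j.+1 * y)).
Proof.
move=> y0 mu1; have mu0 : 0 < mu by lra.
elim: n => [|n IH]; first by rewrite big_ord0 expr0 mul1r subrr.
rewrite big_ord_recr /=.
have -> : rho p (mu ^+ n.+1 * y) - rho p y =
  (rho p (mu ^+ n * y) - rho p y) + (rho p (mu * (mu ^+ n * y)) - rho p (mu ^+ n * y)).
  by rewrite exprS mulrA; ring.
have -> : mu ^+ n.+1 * y = mu * (mu ^+ n * y) by rewrite exprS mulrA.
apply: lerD IH _; apply: K1 => //; exact: mulr_gt0 (exprn_gt0 _ mu0) y0.
Qed.

Lemma tele_lo (y mu : R) n : 0 < y -> 1 <= mu ->
  \sum_(j < n) (Q (mu ^+ j * y) - Q (mu ^+ j.+1 * y) / mu) <= rho p (mu ^+ n * y) - rho p y.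
Proof.
move=> y0 mu1; have mu0 : 0 < mu by lra.
elim: n => [|n IH]; first by rewrite big_ord0 expr0 mul1r subrr.
rewrite big_ord_recr /=.
have -> : rho p (mu ^+ n.+1 * y) - rho p y =
  (rho p (mu ^+ n * y) - rho p y) + (rho p (mu * (mu ^+ n * y)) - rho p (mu ^+ n * y)).
  by rewrite exprS mulrA; ring.
have -> : mu ^+ n.+1 * y = mu * (mu ^+ n * y) by rewrite exprS mulrA.
apply: lerD IH _; apply: K2 => //; exact: mulr_gt0 (exprn_gt0 _ mu0) y0.
Qed.

End Main.

Section Main2.
Variable R : realType.
Variable p : nat -> R.
Hypothesis Hp : prob_distr p.
Variable g : R -> R.
Hypothesis Hg0 : forall x, 0 < x -> 0 < g x.
Hypothesis Hg1 : forall lam, 0 < lam -> (fun t => g (lam * t) / g t) x @[x --> (+oo : set_system R)] --> (1 : R).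
Local Notation Lim f l := (f x @[x --> (+oo : set_system R)] --> (l : R)).
Local Notation Q := (Q p).
Local Notation V := (V p).
Let Lim_scaled := Lim_scaled Hg0 Hg1.
Let ler_divg := ler_divg Hg0.
Let tele_hi := tele_hi Hp.
Let tele_lo := tele_lo Hp.

Lemma b_gt1 (lam : R) : Lim (fun y => Q y / g y) 1 -> 1 < lam ->
  Lim (fun y => (rho p (lam * y) - rho p y) / g y) (ln lam).
Proof.
move=> HQ lam1; set L := ln lam; have L0 : 0 < L by apply: ln_gt0.
apply: Lim_sandwich => e e0.
set b := 2 * L * L / e + 2 * L + 1.
have hL2 : 0 <= 2 * L * L / e.
  apply: divr_ge0; [nra | lra].
have b0 : 0 <= b by rewrite /b; lra.
have [n nb] : exists n : nat, b < n%:R by exists (Num.Def.archi_bound b); exact: archi_boundP b0.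
have n0 : 0 < n%:R :> R by apply: le_lt_trans nb; lra.
set x := L / n%:R.
have x0 : 0 < x by rewrite divr_gt0.
have nx : n%:R * x = L by rewrite /x mulrC divfK // gt_eqF.
set mu := expR x; set nu := expR (- x).
have mu1 : 1 <= mu by have := expR_ge1Dx x; rewrite -/mu; lra.
have mu0 : 0 < mu by lra.
have munu : mu * nu = 1 by rewrite /mu /nu -expRD subrr expR0.
have numu : nu = mu^-1 by rewrite /nu expRN.
have hmu : 1 + x <= mu by exact: expR_ge1Dx.
have hnu : 1 - x <= nu by have := expR_ge1Dx (- x); rewrite -/nu; lra.
have mun : mu ^+ n = lam.
  by rewrite /mu -expRM_natl nx /L lnK // posrE (lt_trans ltr01 lam1).
have hb1 : 2 * L * L / e < n%:R by rewrite /b in nb; lra.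
have hb2 : 2 * L < n%:R by rewrite /b in nb; lra.
have hx2 : 2 * x <= 1.
  rewrite /x mulrA ler_pdivrMr //; lra.
have hLx : 2 * L * x <= e.
  rewrite /x mulrA ler_pdivrMr //; rewrite ltr_pdivrMr // in hb1; lra.
pose F j y := mu * (Q (mu ^+ j * y) / g y) - Q (mu ^+ j.+1 * y) / g y.
pose G j y := Q (mu ^+ j * y) / g y - Q (mu ^+ j.+1 * y) / g y * nu.
have HF : forall j, Lim (F j) (mu * 1 - 1).
  move=> j; apply: Lim_add; first exact: Lim_mul (@Lim_cst _ mu) (Lim_scaled (exprn_gt0 _ mu0) HQ).
  exact: Lim_opp (Lim_scaled (exprn_gt0 _ mu0) HQ).
have HG : forall j, Lim (G j) (1 - 1 * nu).
  move=> j; apply: Lim_add; first exact: (Lim_scaled (exprn_gt0 _ mu0) HQ).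
  exact: Lim_opp (Lim_mul (Lim_scaled (exprn_gt0 _ mu0) HQ) (@Lim_cst _ nu)).
exists (fun y => \sum_(j < n) G j y), (fun y => \sum_(j < n) F j y).
exists (\sum_(j < n) (1 - 1 * nu)), (\sum_(j < n) (mu * 1 - 1)); split.
- exact: (@Lim_sum _ n G (fun _ => 1 - 1 * nu) HG).
- exact: (@Lim_sum _ n F (fun _ => mu * 1 - 1) HF).
- rewrite sumr_const card_ord -mulr_natr mul1r.
  have h1 : 1 - nu >= nu * x by nra.
  have h2 : (1 - nu) * n%:R >= nu * L by rewrite -nx; nra.
  nra.
- rewrite sumr_const card_ord -mulr_natr mulr1.
  have h1 : mu * (1 - x) <= 1 by nra.
  have h2 : mu <= 2 by nra.
  have h3 : (mu - 1) * n%:R <= mu * L by rewrite -nx; nra.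
  nra.
- exists 0 => y y0; have gy0 : g y != 0 by apply/lt0r_neq0/Hg0.
  have mun0 : mu != 0 by apply/lt0r_neq0.
  apply/andP; split.
  + have H := ler_divg y0 (tele_lo n y0 mu1); rewrite mun in H.
    apply: le_trans _ H; rewrite mulr_suml.
    rewrite le_eqVlt; apply/orP; left; apply/eqP/eq_bigr => j _; rewrite /G numu; field.
    by rewrite ?gy0 ?mun0.
  + have H := ler_divg y0 (tele_hi n y0 mu1); rewrite mun in H.
    apply: le_trans H _; rewrite mulr_suml.
    rewrite le_eqVlt; apply/orP; left; apply/eqP/eq_bigr => j _; rewrite /F; field.
    by rewrite ?gy0 ?mun0.
Qed.

End Main2.

Section Main3.
Variable R : realType.
Variable p : nat -> R.
Hypothesis Hp : prob_distr p.
Local Notation Lim f l := (f x @[x --> (+oo : set_system R)] --> (l : R)).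
Local Notation Q := (Q p).

Definition Dm (mu y : R) := rho p (mu * y) - rho p y.

Lemma geo_eq (r : R) J : (1 - r) * \sum_(j < J) r ^+ j = 1 - r ^+ J.
Proof.
elim: J => [|J IH]; first by rewrite big_ord0 expr0; ring.
by rewrite big_ord_recr /= mulrDr IH exprS; ring.
Qed.

Lemma potter (mu th M : R) : 1 <= mu -> 0 < th ->
  (forall z, M < z -> [/\ 0 < z, Dm mu (mu * z) <= th * Dm mu z & Dm mu z <= th * Dm mu (mu * z)]) ->
  forall y, M < y -> forall j,
    Dm mu (mu ^+ j * y) <= th ^+ j * Dm mu y /\ Dm mu y <= th ^+ j * Dm mu (mu ^+ j * y).
Proof.
move=> mu1 th0 H y My; have [y0 _ _] := H y My.
elim=> [|j [IH1 IH2]]; first by rewrite !expr0 !mul1r.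
have Mz : M < mu ^+ j * y.
  apply: lt_le_trans My _; rewrite ler_peMl ?(ltW y0) //; exact: exprn_ege1.
have [_ h1 h2] := H _ Mz.
have -> : mu ^+ j.+1 * y = mu * (mu ^+ j * y) by rewrite exprS mulrA.
rewrite exprS; split.
- apply: le_trans h1 _; rewrite -mulrA ler_pM2l //.
- apply: le_trans IH2 _; rewrite [th * _]mulrC -mulrA ler_pM2l ?exprn_gt0 //.
Qed.

Lemma chain_hi (mu nu th y : R) : 1 <= mu -> mu * nu = 1 -> 0 < y -> 0 <= th ->
  (forall j, Dm mu (mu ^+ j * y) <= th ^+ j * Dm mu y) ->
  forall J, Q y <= Dm mu y * \sum_(j < J) (th * nu) ^+ j + nu ^+ J * Q (mu ^+ J * y).
Proof.
move=> mu1 munu y0 th0 HP.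
have mu0 : 0 < mu by lra.
have nuE : nu = mu^-1 by rewrite -(mul1r (mu^-1)) -munu mulrAC mulfV ?mul1r // gt_eqF.
have nu0 : 0 < nu by rewrite nuE invr_gt0.
elim=> [|J IH]; first by rewrite big_ord0 !expr0 mulr0 add0r !mul1r.
rewrite big_ord_recr /=.
set z := mu ^+ J * y.
have z0 : 0 < z by rewrite mulr_gt0 // exprn_gt0.
have k := K2 Hp z0 mu1.
have a1 : nu ^+ J * Q z <= nu ^+ J * Dm mu z + nu ^+ J.+1 * Q (mu * z).
  rewrite exprSr -mulrA -mulrDr ler_wpM2l ?exprn_ge0 ?(ltW nu0) //.
  rewrite /Dm; move: k; rewrite nuE; lra.
have a2 : nu ^+ J * Dm mu z <= nu ^+ J * (th ^+ J * Dm mu y).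
  by rewrite ler_wpM2l ?exprn_ge0 ?(ltW nu0) // HP.
have -> : mu ^+ J.+1 * y = mu * z by rewrite exprS mulrA.
rewrite exprMn.
have e1 : Dm mu y * (\sum_(i < J) (th * nu) ^+ i + th ^+ J * nu ^+ J) =
   Dm mu y * \sum_(i < J) (th * nu) ^+ i + nu ^+ J * (th ^+ J * Dm mu y) by ring.
rewrite e1; move: IH a1 a2; rewrite -/z; lra.
Qed.

Lemma chain_lo (mu nu th y : R) : 1 <= mu -> mu * nu = 1 -> 0 < y -> 0 < th ->
  (forall j, Dm mu y <= th ^+ j * Dm mu (mu ^+ j * y)) ->
  forall J, Dm mu y * nu * \sum_(j < J) (nu * th^-1) ^+ j + nu ^+ J * Q (mu ^+ J * y) <= Q y.
Proof.
move=> mu1 munu y0 th0 HP.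
have mu0 : 0 < mu by lra.
have nuE : nu = mu^-1 by rewrite -(mul1r (mu^-1)) -munu mulrAC mulfV ?mul1r // gt_eqF.
have nu0 : 0 < nu by rewrite nuE invr_gt0.
elim=> [|J IH]; first by rewrite big_ord0 !expr0 mulr0 add0r !mul1r.
rewrite big_ord_recr /=.
set z := mu ^+ J * y.
have z0 : 0 < z by rewrite mulr_gt0 // exprn_gt0.
have k := K1 Hp z0 mu1.
have a1 : nu ^+ J.+1 * Dm mu z + nu ^+ J.+1 * Q (mu * z) <= nu ^+ J * Q z.
  rewrite -mulrDr exprSr -mulrA ler_wpM2l ?exprn_ge0 ?(ltW nu0) //.
  have h : nu * (Dm mu z + Q (mu * z)) <= nu * (mu * Q z).
    by rewrite ler_wpM2l ?(ltW nu0) // /Dm; move: k; lra.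
  by rewrite mulrA [nu * mu]mulrC munu mul1r in h.
have a2 : th^-1 ^+ J * Dm mu y <= Dm mu z.
  have := HP J; rewrite -/z => h.
  have : th^-1 ^+ J * Dm mu y <= th^-1 ^+ J * (th ^+ J * Dm mu z).
    by rewrite ler_wpM2l ?exprn_ge0 ?invr_ge0 ?(ltW th0).
  by rewrite mulrA -exprMn mulVf ?gt_eqF // expr1n mul1r.
have a3 : nu ^+ J.+1 * (th^-1 ^+ J * Dm mu y) <= nu ^+ J.+1 * Dm mu z.
  by rewrite ler_wpM2l ?exprn_ge0 ?(ltW nu0).
have -> : mu ^+ J.+1 * y = mu * z by rewrite exprS mulrA.
have e1 : Dm mu y * nu * (\sum_(i < J) (nu * th^-1) ^+ i + (nu * th^-1) ^+ J) =
   Dm mu y * nu * \sum_(i < J) (nu * th^-1) ^+ i + nu ^+ J.+1 * (th^-1 ^+ J * Dm mu y).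
  by rewrite exprMn exprS; ring.
rewrite e1; move: IH a1 a3; rewrite -/z; lra.
Qed.

Lemma tail_small (x y eta : R) : 0 < x -> 0 < y -> 0 < eta ->
  exists J, expR (- x) ^+ J * Q (expR x ^+ J * y) <= eta.
Proof.
move=> x0 y0 e0.
have ey0 : 0 < eta / y by rewrite divr_gt0.
case: (up_near1 Hp ey0) => t0 t00 Ht0.
have b0 : 0 <= (x * t0 * y)^-1 by rewrite invr_ge0 ltW // !mulr_gt0.
have [J nb] : exists J : nat, (x * t0 * y)^-1 < J%:R by exists (Num.Def.archi_bound (x * t0 * y)^-1); exact: archi_boundP b0.
exists J.
have mJ : 1 + J%:R * x <= expR x ^+ J by rewrite -expRM_natl expR_ge1Dx.
have mJ0 : 0 < expR x ^+ J by rewrite exprn_gt0 // expR_gt0.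
have z0 : 0 < expR x ^+ J * y by rewrite mulr_gt0.
have hJ : 1 < J%:R * (x * t0 * y).
  by rewrite -ltr_pdivrMr ?mulr_gt0 // div1r.
have hz : (expR x ^+ J * y)^-1 <= t0.
  rewrite -div1r ler_pdivrMr //.
  have : 0 < t0 * y by rewrite mulr_gt0.
  nra.
have zi0 : 0 < (expR x ^+ J * y)^-1 by rewrite invr_gt0.
have := Ht0 _ zi0 hz.
have -> : expR (- x) ^+ J * Q (expR x ^+ J * y) = y * (1 - up p (expR x ^+ J * y)^-1).
  by rewrite /Q mulrA mulrA -exprMn -expRD addNr expR0 expr1n mul1r.
by move=> h; rewrite mulrC -ler_pdivlMr.
Qed.

End Main3.

Section Main4.
Variable R : realType.
Variable p : nat -> R.
Hypothesis Hp : prob_distr p.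
Variable g : R -> R.
Hypothesis Hg0 : forall x, 0 < x -> 0 < g x.
Hypothesis Hg1 : forall lam, 0 < lam -> (fun t => g (lam * t) / g t) x @[x --> (+oo : set_system R)] --> (1 : R).
Local Notation Lim f l := (f x @[x --> (+oo : set_system R)] --> (l : R)).
Local Notation Q := (Q p).
Local Notation Dm := (Dm p).

Lemma b_to_a' :
  (forall lam, 0 < lam -> Lim (fun y => (rho p (lam * y) - rho p y) / g y) (ln lam)) ->
  Lim (fun y => Q y / g y) 1.
Proof.
move=> HB; apply: Lim_sandwich => e e0.
set m := Num.min e 1.
have hm1 : m <= e by rewrite /m ge_min lexx.
have hm2 : m <= 1 by rewrite /m ge_min lexx orbT.
have hm0 : 0 < m by rewrite /m lt_min e0 ltr01.
set x := m / 8.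
have x0 : 0 < x by rewrite /x divr_gt0.
have xe : 8 * x <= e by rewrite /x mulrC divfK //; lra.
have x1 : 8 * x <= 1 by rewrite /x mulrC divfK //; lra.
set mu := expR x; set nu := expR (- x); set th := 1 + x * x.
have mu0 : 0 < mu by apply: expR_gt0.
have nu0 : 0 < nu by apply: expR_gt0.
have munu : mu * nu = 1 by rewrite /mu /nu -expRD subrr expR0.
have hmu : 1 + x <= mu by exact: expR_ge1Dx.
have mu1 : 1 <= mu by lra.
have hnu : 1 - x <= nu by have := expR_ge1Dx (- x); rewrite -/nu; lra.
have hnu2 : nu * (1 + x) <= 1.
  have h : nu * (1 + x) <= nu * mu by rewrite ler_pM2l.
  by rewrite [nu * mu]mulrC munu in h.
have th1 : 1 < th by rewrite /th; nra.
have th0 : 0 < th by lra.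
have HD : Lim (fun y => Dm mu y / g y) x.
  have := HB mu mu0; rewrite /mu expRK; exact.
have HD2 : Lim (fun y => Dm mu (mu * y) / g y) x := Lim_scaled Hg0 Hg1 mu0 HD.
have E1 := ratio_ev HD2 HD x0 th1.
have E2 := ratio_ev HD HD2 x0 th1.
case: (ev_and (ev_gt 0) (ev_and E1 E2)) => M HM.
have HM' : forall z, M < z -> [/\ 0 < z, Dm mu (mu * z) <= th * Dm mu z & Dm mu z <= th * Dm mu (mu * z)].
  move=> z /HM [z0 [h1 h2]]; have gz : 0 < (g z)^-1 by rewrite invr_gt0 Hg0.
  by rewrite mulrA ler_pM2r // in h1; rewrite mulrA ler_pM2r // in h2.
have HP := potter mu1 th0 HM'.
set r := th * nu; set s := nu * th^-1.
have hr : r * (1 + x) <= th by rewrite /r -mulrA; nra.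
have r0 : 0 <= r by rewrite /r mulr_ge0 // ltW.
have r1 : 0 < 1 - r by rewrite /th in hr; nra.
have s0 : 0 <= s by rewrite /s mulr_ge0 // ?invr_ge0 ltW.
have sth : s * th = nu by rewrite /s mulfVK // gt_eqF.
have snu : s <= nu by rewrite /s ler_piMr ?(ltW nu0) // invf_le1 //; lra.
have nu1 : nu < 1 by nra.
have s1 : s <= 1 by lra.
have s1' : 0 < 1 - s.
  lra.
have [J nb] : exists J : nat, (x * x)^-1 < J%:R.
  by exists (Num.Def.archi_bound (x * x)^-1); apply: archi_boundP; rewrite invr_ge0 ltW // mulr_gt0.
have sJ0 : 0 <= s ^+ J by rewrite exprn_ge0.
have sJx : s ^+ J <= x.
  have h1 : s ^+ J <= nu ^+ J.
    rewrite /s exprMn ler_piMr ?exprn_ge0 ?(ltW nu0) // exprn_ile1 ?invr_ge0 ?(ltW th0) //.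
    by rewrite invf_le1 //; lra.
  have h2 : nu ^+ J * (1 + J%:R * x) <= 1.
    have h : 1 + J%:R * x <= mu ^+ J by rewrite /mu -expRM_natl expR_ge1Dx.
    have h' : nu ^+ J * (1 + J%:R * x) <= nu ^+ J * mu ^+ J by rewrite ler_pM2l // exprn_gt0.
    by rewrite -exprMn [nu * mu]mulrC munu expr1n in h'.
  have h3 : 1 < J%:R * (x * x) by rewrite -ltr_pdivrMr ?mulr_gt0 // div1r.
  have h4 : 0 <= nu ^+ J by rewrite exprn_ge0 // ltW.
  move: h1 h2 h4; set A := nu ^+ J => h1 h2 h4.
  have h5 : A <= A * (J%:R * (x * x)) by rewrite ler_peMr //; lra.
  have h6 : A * J%:R * x <= 1 by nra.
  have h7 : A * J%:R * x * x <= x by rewrite ler_piMl // mulr_ge0 // ?mulr_ge0 // ltW.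
  have e7 : A * (J%:R * (x * x)) = A * J%:R * x * x by ring.
  lra.
exists (fun y => Dm mu y / g y * (nu * (1 - s ^+ J) / (1 - s))),
       (fun y => Dm mu y / g y * (1 - r)^-1).
exists (x * (nu * (1 - s ^+ J) / (1 - s))), (x * (1 - r)^-1); split.
- exact: (Lim_mul HD (@Lim_cst _ _)).
- exact: (Lim_mul HD (@Lim_cst _ _)).
- rewrite mulrA ler_pdivlMr //.
  have c0 : s * (x * x) <= x * x by rewrite ler_piMl // mulr_ge0 // ltW.
  have c1 : s * (1 + x * x) >= 1 - x by rewrite -/th sth.
  have a1 : 1 - s <= x + x * x.
    have e1 : s * (1 + x * x) = s + s * (x * x) by ring.
    lra.
  have a2 : x * nu * (1 - s ^+ J) >= x * ((1 - x) * (1 - x)).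
    rewrite -mulrA ler_wpM2l ?(ltW x0) //.
    apply: ler_pM; lra.
  have xx0 : 0 <= x * x by rewrite mulr_ge0 // ltW.
  have ex0 : 0 <= e * x by rewrite mulr_ge0 // ltW.
  case: (leP e 1) => he.
  + have b1 : (1 - e) * (1 - s) <= (1 - e) * (x + x * x) by rewrite ler_wpM2l //; lra.
    have b2 : 0 <= x * (e + e * x + x * x - 3 * x) by rewrite mulr_ge0 //; lra.
    have e2 : x * ((1 - x) * (1 - x)) - (1 - e) * (x + x * x) = x * (e + e * x + x * x - 3 * x) by ring.
    lra.
  + have b1 : (1 - e) * (1 - s) <= 0 by rewrite mulr_le0_ge0 //; lra.
    have b2 : 0 <= x * ((1 - x) * (1 - x)) by rewrite mulr_ge0 ?mulr_ge0 //; lra.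
    lra.
- rewrite ler_pdivrMr //.
  have a1 : (1 - r) * (1 + x) >= x - x * x.
    have e1 : (1 - r) * (1 + x) = 1 + x - r * (1 + x) by ring.
    rewrite e1; rewrite /th in hr; lra.
  have c1 : e * x <= e / 8.
    have : e * x <= e * (1 / 8) by rewrite ler_wpM2l ?(ltW e0) //; lra.
    by rewrite mul1r.
  have c3 : 0 <= x * (e - 2 * x - e * x) by rewrite mulr_ge0 //; lra.
  have b1 : (1 + e) * ((1 - r) * (1 + x)) >= (1 + e) * (x - x * x) by rewrite ler_wpM2l //; lra.
  have e2 : (1 + e) * (x - x * x) - x * (1 + x) = x * (e - 2 * x - e * x) by ring.
  have a2 : x * (1 + x) <= (1 + e) * (1 - r) * (1 + x) by rewrite -mulrA; lra.
  by rewrite ler_pM2r in a2; lra.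
- exists M => y My; have [y0 _ _] := HM' y My.
  have gy : 0 < g y by apply: Hg0.
  have D0 : 0 <= Dm mu y by rewrite /Dm; exact: (rho_mono Hp y0 mu1).
  have [HP1 HP2] : (forall j, Dm mu (mu ^+ j * y) <= th ^+ j * Dm mu y) /\
                   (forall j, Dm mu y <= th ^+ j * Dm mu (mu ^+ j * y)).
    by split => j; have [] := HP y My j.
  apply/andP; split.
  + have := chain_lo Hp mu1 munu y0 th0 HP2 J.
    have : 0 <= nu ^+ J * Q (mu ^+ J * y).
      by rewrite mulr_ge0 ?exprn_ge0 ?(ltW nu0) // Q_ge0 // mulr_gt0 // exprn_gt0.
    have geo := geo_eq s J.
    have -> : \sum_(j < J) (nu * th^-1) ^+ j = (1 - s ^+ J) / (1 - s).
      by rewrite -/s -geo [(1 - s) * _]mulrC mulfK // gt_eqF.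
    move=> h1 h2.
    rewrite mulrAC ler_pM2r ?invr_gt0 //.
    have -> : Dm mu y * (nu * (1 - s ^+ J) / (1 - s)) = Dm mu y * nu * ((1 - s ^+ J) / (1 - s)).
      by rewrite !mulrA.
    lra.
  + rewrite [X in _ <= X]mulrAC; apply: (ler_divg Hg0 y0).
    apply/ler_addgt0Pr => eta eta0.
    case: (tail_small Hp x0 y0 eta0) => J' HJ'.
    have := chain_hi Hp mu1 munu y0 (ltW th0) HP1 J'.
    rewrite -/r -/mu -/nu in HJ' *.
    have geo := geo_eq r J'.
    have : \sum_(j < J') r ^+ j <= (1 - r)^-1.
      rewrite -(ler_pM2l r1) mulfV ?gt_eqF // geo.
      by rewrite lerBlDr lerDl exprn_ge0.
    move=> hs h.
    have : Dm mu y * \sum_(j < J') r ^+ j <= Dm mu y * (1 - r)^-1 by rewrite ler_wpM2l.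
    lra.
Qed.

End Main4.

Unset Implicit Arguments.

Theorem lemma2p3 (R : realType) (p : nat -> R) (g : R -> R) :
  prob_distr p -> inf_many_pos p -> slowly_varying g ->
  ((fun t => trunc_mass p t / (t * g t^-1)) @ 0^'+ --> (1 : R)
   <->
   (forall lam : R, 0 < lam ->
      (fun t => (rho p (lam * t) - rho p t) / g t) @ +oo --> ln lam)).
Proof.
move=> Hp _ [Hg0 [_ Hg1]].
have conv : (fun t => trunc_mass p t / (t * g t^-1)) @ 0^'+ --> (1 : R) <->
    (fun y => V p y / g y) x @[x --> (+oo : set_system R)] --> (1 : R).
  have E : ev (fun y : R => V p y / g y = trunc_mass p (y^-1) / (y^-1 * g (y^-1)^-1)).
    exists 0 => y y0; rewrite invrK /V; field.
    by rewrite !gt_eqF // Hg0.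
  have E' : ev (fun y : R => trunc_mass p (y^-1) / (y^-1 * g (y^-1)^-1) = V p y / g y).
    by case: E => M HM; exists M => y /HM ->.
  rewrite right_inv; split => H.
  - exact: (Lim_ev_eq E H).
  - exact: (Lim_ev_eq E' H).
rewrite conv; split.
- move=> HV; have HQ := a_to_a' Hp Hg0 Hg1 HV.
  move=> lam lam0.
  case: (ltgtP lam 1) => [lt1|gt1|->].
  + have c1 : 1 < lam^-1 by rewrite invf_gt1.
    have H := b_gt1 Hp Hg0 Hg1 HQ c1.
    have H2 := Lim_opp (Lim_scaled Hg0 Hg1 lam0 H).
    rewrite lnV ?posrE // opprK in H2.
    have E : ev (fun y : R => (rho p (lam * y) - rho p y) / g y =
        - ((rho p (lam^-1 * (lam * y)) - rho p (lam * y)) / g y)).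
      exists 0 => y y0; rewrite mulrA mulVf ?gt_eqF // mul1r.
      by rewrite -mulNr opprB.
    exact: (Lim_ev_eq E H2).
  + exact: (b_gt1 Hp Hg0 Hg1 HQ gt1).
  + rewrite ln1.
    have E : ev (fun y : R => (rho p (1 * y) - rho p y) / g y = 0).
      by exists 0 => y _; rewrite mul1r subrr mul0r.
    exact: (Lim_ev_eq E (@Lim_cst _ 0)).
- move=> HB; apply: (a'_to_a Hp Hg0 Hg1); exact: (b_to_a' Hp Hg0 Hg1 HB).
Qed.
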